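(* Let $N$ be an oriented subnetwork of $\Gamma(T)$. Let ${\bf t}_i,{\bf t}_{i'},{\bf t}_j,{\bf t}_{j'}\in T$ with ${\bf t}_{i'}=(a,c)$, ${\bf t}_i=(b,d)$, ${\bf t}_{j'}=(e,g)$, ${\bf t}_j=(f,h)$, where $a<b$, $c<d$, $e<f$, $g<h$, so that $R_{i,i'}=[a,b]\times[c,d]$ and $R_{j,j'}=[e,f]\times[g,h]$ both have positive slope. Assume the two rectangles form a crossing configuration in the sense that $[a,b]\subseteq[e,f]$ and $[g,h]\subseteq[c,d]$. Suppose $N$ contains directed Manhattan paths from ${\bf t}_i$ to ${\bf t}_{i'}$, from ${\bf t}_{i'}$ to ${\bf t}_i$, from ${\bf t}_j$ to ${\bf t}_{j'}$ and from ${\bf t}_{j'}$ to ${\bf t}_j$. Then $N$ contains directed Manhattan paths from ${\bf t}_i$ to ${\bf t}_{j'}$, from ${\bf t}_{j'}$ to ${\bf t}_i$, from ${\bf t}_j$ to ${\bf t}_{i'}$ and from ${\bf t}_{i'}$ to ${\bf t}_j$. (The mirror-image statement, obtained by reflecting the plane in a vertical line, holds for rectangles of negative slope.)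
   Context: $T$ is a finite set of points (terminals) in the plane, no two on a common horizontal or vertical line. For points $p,q$, $R(p,q)$ is the smallest closed axis-parallel rectangle containing $p$ and $q$; for ${\bf t}_i,{\bf t}_j\in T$, $R_{i,j}=R({\bf t}_i,{\bf t}_j)$. $\Gamma(T)$ is the grid formed by the horizontal and vertical lines through the terminals, restricted to the bounding box of $T$: its vertices are the intersection points of these lines and its edges are the segments between consecutive vertices on a line. An oriented subnetwork of $\Gamma(T)$ is a set of edges of $\Gamma(T)$, each directed in exactly one sense. A directed Manhattan path from $p$ to $q$ is a directed path in the network whose length equals $|p^x-q^x|+|p^y-q^y|$. A rectangle $R_{i,j}$ has positive slope if $({\bf t}_i^x-{\bf t}_j^x)({\bf t}_i^y-{\bf t}_j^y)>0$ and negative slope otherwise. *)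

(* Defs.v *)
From HB Require Import structures.
From mathcomp Require Import all_boot all_order all_algebra.
Set Implicit Arguments. Unset Strict Implicit. Unset Printing Implicit Defensive.
Import Order.TTheory GRing.Theory Num.Theory.
Local Open Scope ring_scope.

Section Grid.
Variable R : realFieldType.
Notation pt := (R * R)%type.

Definition general_position (T : seq pt) : Prop :=
  uniq T /\
  (forall p q, p \in T -> q \in T -> p != q -> p.1 != q.1 /\ p.2 != q.2).

Definition xs (T : seq pt) : seq R := [seq p.1 | p <- T].
Definition ys (T : seq pt) : seq R := [seq p.2 | p <- T].

Definition consec (s : seq R) (u v : R) : Prop :=
  u \in s /\ v \in s /\ u < v /\ (forall w, w \in s -> ~ (u < w /\ w < v)).

(* p, q are the endpoints of an (undirected) edge of the grid Gamma(T):
   a segment between consecutive grid vertices on a horizontal line or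
   on a vertical line through terminals. *)
Definition grid_edge (T : seq pt) (p q : pt) : Prop :=
  (p.2 = q.2 /\ p.2 \in ys T /\ (consec (xs T) p.1 q.1 \/ consec (xs T) q.1 p.1))
  \/
  (p.1 = q.1 /\ p.1 \in xs T /\ (consec (ys T) p.2 q.2 \/ consec (ys T) q.2 p.2)).

(* An oriented subnetwork: a set of directed edges N (N p q = edge directed
   from p to q), each an edge of Gamma(T), each edge used in at most one sense. *)
Definition oriented_subnetwork (T : seq pt) (N : rel pt) : Prop :=
  (forall p q, N p q -> grid_edge T p q) /\
  (forall p q, N p q -> ~~ N q p).

(* L1 distance; equals Euclidean length for axis-parallel segments. *)
Definition l1 (p q : pt) : R := `|p.1 - q.1| + `|p.2 - q.2|.

Fixpoint path_length (p : pt) (s : seq pt) : R :=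
  if s is q :: s' then l1 p q + path_length q s' else 0.

Definition dir_manhattan_path (N : rel pt) (p q : pt) : Prop :=
  exists s : seq pt, [/\ path N p s, last p s = q & path_length p s = l1 p q].

End Grid.

(* Main.v *)
Require Import Defs.
From HB Require Import structures.
From mathcomp Require Import all_boot all_order all_algebra.
From mathcomp Require Import lra.
Import Order.TTheory GRing.Theory Num.Theory.
Local Open Scope ring_scope.
Set Implicit Arguments. Unset Strict Implicit.

Lemma l1_tri (R : realFieldType) (p q r : R * R) : l1 p r <= l1 p q + l1 q r.
Proof.
rewrite /l1.
have h1 := ler_distD q.1 p.1 r.1. have h2 := ler_distD q.2 p.2 r.2.
lra.
Qed.

Lemma plen_ge (R : realFieldType) (s : seq (R * R)) p : l1 p (last p s) <= path_length p s.
Proof.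
elim: s p => [|q s IH] p /=.
  by rewrite /l1 !subrr normr0 addr0.
apply: le_trans (l1_tri p q _) _. by rewrite lerD2l.
Qed.

Lemma plen_cat (R : realFieldType) (s1 s2 : seq (R * R)) p :
  path_length p (s1 ++ s2) = path_length p s1 + path_length (last p s1) s2.
Proof.
elim: s1 p => [|q s IH] p /=; first by rewrite add0r.
by rewrite IH addrA.
Qed.

Lemma dmp_cat (R : realFieldType) (N : rel (R * R)) p z w :
  dir_manhattan_path N p z -> dir_manhattan_path N z w ->
  l1 p w = l1 p z + l1 z w -> dir_manhattan_path N p w.
Proof.
move=> [s1 [P1 L1 E1]] [s2 [P2 L2 E2]] E.
exists (s1 ++ s2); split.
- by rewrite cat_path P1 L1 P2.
- by rewrite last_cat L1.
- by rewrite plen_cat E1 L1 E2 E.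
Qed.

Lemma dmp_refl (R : realFieldType) (N : rel (R * R)) p : dir_manhattan_path N p p.
Proof. by exists [::]; split => //=; rewrite /l1 !subrr normr0 addr0. Qed.

Lemma dmp_step (R : realFieldType) (N : rel (R * R)) p q : N p q -> dir_manhattan_path N p q.
Proof. by move=> H; exists [:: q]; split; rewrite /= ?H ?addr0. Qed.

Lemma betw (R : realFieldType) (a a' l b b' m : R) : l <= a -> m <= b ->
  `|a - l| + `|b - m| = `|a - a'| + `|b - b'| + (`|a' - l| + `|b' - m|) ->
  [/\ l <= a', a' <= a, m <= b' & b' <= b].
Proof.
move=> h1 h2.
rewrite (@ger0_norm _ (a - l)); last lra.
rewrite (@ger0_norm _ (b - m)); last lra.
case: (lerP 0 (a - a')) => c1; [rewrite (ger0_norm c1)|rewrite (ltr0_norm c1)];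
case: (lerP 0 (b - b')) => c2; [rewrite (ger0_norm c2)|rewrite (ltr0_norm c2)|rewrite (ger0_norm c2)|rewrite (ltr0_norm c2)];
case: (lerP 0 (a' - l)) => c3; [rewrite (ger0_norm c3)|rewrite (ltr0_norm c3)|rewrite (ger0_norm c3)|rewrite (ltr0_norm c3)|rewrite (ger0_norm c3)|rewrite (ltr0_norm c3)|rewrite (ger0_norm c3)|rewrite (ltr0_norm c3)];
case: (lerP 0 (b' - m)) => c4; rewrite ?(ger0_norm c4) ?(ltr0_norm c4) => E; split; lra.
Qed.

Lemma lin_add (R : realFieldType) (a b c a' b' c' : R) : c <= b -> b <= a -> c' <= b' -> b' <= a' ->
  `|a - c| + `|a' - c'| = (`|a - b| + `|a' - b'|) + (`|b - c| + `|b' - c'|).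
Proof.
move=> *.
rewrite (@ger0_norm _ (a - c)); last lra.
rewrite (@ger0_norm _ (a' - c')); last lra.
rewrite (@ger0_norm _ (a - b)); last lra.
rewrite (@ger0_norm _ (a' - b')); last lra.
rewrite (@ger0_norm _ (b - c)); last lra.
rewrite (@ger0_norm _ (b' - c')); last lra.
lra.
Qed.
Definition sepb (R : realFieldType) (G : R -> Prop) (u v : R) :=
  [/\ G u, G v, (forall w, G w -> ~ (u < w /\ w < v)) & (forall w, G w -> ~ (v < w /\ w < u))].

Definition step (R : realFieldType) (X Y : R * R -> R) (GX GY : R -> Prop) (u v : R * R) :=
  (Y u = Y v /\ GY (Y u) /\ sepb GX (X u) (X v)) \/
  (X u = X v /\ GX (X u) /\ sepb GY (Y u) (Y v)).

Lemma geo_step (R : realFieldType) (X Y : R * R -> R)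
  (hl1 : forall u v, l1 u v = `|X u - X v| + `|Y u - Y v|) p p' (s : seq (R * R)) :
  path_length p (p' :: s) = l1 p (last p' s) ->
  X (last p' s) <= X p -> Y (last p' s) <= Y p ->
  [/\ path_length p' s = l1 p' (last p' s),
      X (last p' s) <= X p', X p' <= X p, Y (last p' s) <= Y p' & Y p' <= Y p].
Proof.
rewrite /= => E h1 h2.
have g1 := plen_ge s p'.
have g2 := l1_tri p p' (last p' s).
have e1 : path_length p' s = l1 p' (last p' s) by apply/eqP; rewrite eq_le g1 andbT; lra.
have e2 : l1 p (last p' s) = l1 p p' + l1 p' (last p' s) by lra.
move: e2; rewrite !hl1 => e2.
have [? ? ? ?] := betw h1 h2 e2.
split => //.
by rewrite e1 hl1.
Qed.

Lemma cross (R : realFieldType) (N : rel (R * R)) (X Y : R * R -> R) (GX GY : R -> Prop)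
  (hl1 : forall u v, l1 u v = `|X u - X v| + `|Y u - Y v|)
  (hinj : forall u v, X u = X v -> Y u = Y v -> u = v)
  (hstep : forall u v, N u v -> step X Y GX GY u v) :
  forall n s t p q, (size s + size t <= n)%N ->
  path N p s -> path N q t ->
  path_length p s = l1 p (last p s) -> path_length q t = l1 q (last q t) ->
  X (last p s) <= X p -> Y (last p s) <= Y p -> X (last q t) <= X q -> Y (last q t) <= Y q ->
  X p <= X q -> Y q <= Y p -> X (last q t) <= X (last p s) -> Y (last p s) <= Y (last q t) ->
  GX (X p) -> GY (Y p) -> GX (X q) -> GY (Y q) ->
  exists z, [/\ dir_manhattan_path N p z, dir_manhattan_path N z (last q t),
   X z <= X p /\ Y z <= Y p & X (last q t) <= X z /\ Y (last q t) <= Y z].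
Proof.
have base : forall p t, path N p t -> path_length p t = l1 p (last p t) ->
  X (last p t) <= X p -> Y (last p t) <= Y p ->
  exists z, [/\ dir_manhattan_path N p z, dir_manhattan_path N z (last p t),
   X z <= X p /\ Y z <= Y p & X (last p t) <= X z /\ Y (last p t) <= Y z].
  move=> p t Pt Et h1 h2; exists p; split => //; first exact: dmp_refl.
  by exists t.
elim=> [|n IH] s t p q Hsz Ps Pt Es Et hp1 hp2 hq1 hq2 c1 c2 c3 c4 gp1 gp2 gq1 gq2.
  have s0 : s = [::] by destruct s.
  have t0 : t = [::] by move: Hsz; rewrite s0; destruct t.
  subst s t; move: c3 c4 => /= c3 c4.
  have e : p = q by apply: hinj; apply/eqP; rewrite eq_le ?c1 ?c2 ?c3 ?c4.
  by subst; apply: (base q [::]).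

have [lY|geY] := ltP (Y q) (Y p).
  destruct s as [|p' s'].
    move: c4 => /= c4; lra.
  move: Ps => /= /andP [Npp' Ps'].
  have [e1 l1' l2' l3' l4'] := geo_step hl1 Es hp1 hp2.
  have Yq' : Y q <= Y p'.
    case: (hstep _ _ Npp') => [[<- _] | [_ [_ [_ _ _ H]]]]; first exact: ltW.
    rewrite leNgt; apply/negP => H'; exact: (H (Y q)).
  have [gx' gy'] : GX (X p') /\ GY (Y p').
    by case: (hstep _ _ Npp') => [[<- [? [_ ? _ _]]] | [<- [? [_ ? _ _]]]].
  have Hsz' : (size s' + size t <= n)%N by move: Hsz; rewrite /= addSn ltnS.
  have [z [D1 D2 [z1 z2] [z3 z4]]] := IH s' t p' q Hsz' Ps' Pt e1 Et l1' l3' hq1 hq2 (le_trans l2' c1) Yq' c3 c4 gx' gy' gq1 gq2.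
  exists z; split => //; try (split; lra).
  apply: (dmp_cat (dmp_step Npp') D1).
  rewrite !hl1; apply: lin_add; lra.
have eY : Y p = Y q by apply/eqP; rewrite eq_le geY c2.
have [lX|geX] := ltP (X p) (X q).
  destruct t as [|q' t'].
    move: c3 => /= c3; lra.
  move: Pt => /= /andP [Nqq' Pt'].
  have [e1 l1' l2' l3' l4'] := geo_step hl1 Et hq1 hq2.
  have Xq' : X p <= X q'.
    case: (hstep _ _ Nqq') => [[_ [_ [_ _ _ H]]] | [<- _]]; last exact: ltW.
    rewrite leNgt; apply/negP => H'; exact: (H (X p)).
  have [gx' gy'] : GX (X q') /\ GY (Y q').
    by case: (hstep _ _ Nqq') => [[<- [? [_ ? _ _]]] | [<- [? [_ ? _ _]]]].
  have Hsz' : (size s + size t' <= n)%N by move: Hsz; rewrite /= addnS ltnS.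
  have Yq'' : Y q' <= Y p by rewrite eY.
  exact: (IH s t' p q' Hsz' Ps Pt' Es e1 hp1 hp2 l1' l3' Xq' Yq'' c3 c4 gp1 gp2 gx' gy').
have e : p = q by apply: hinj => //; apply/eqP; rewrite eq_le geX c1.
by subst; apply: (base q t).
Qed.
Lemma consec_no (R : realFieldType) (s : seq R) x y : consec s x y ->
  [/\ x \in s, y \in s, x < y & forall w, w \in s -> x < w -> w < y -> False].
Proof. by move=> [hx [hy [hxy H]]]; split => // w hw h1 h2; apply: (H w hw). Qed.

Lemma sg_inv (R : realFieldType) (sg x : R) : sg = 1 \/ sg = -1 -> sg * (sg * x) = x.
Proof. by case=> ->; rewrite ?mul1r ?mulN1r ?opprK. Qed.

Lemma sep_of (R : realFieldType) (s : seq R) sg (hsg : sg = 1 \/ sg = -1) u v :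
  consec s u v \/ consec s v u -> sepb (fun w => sg * w \in s) (sg * u) (sg * v).
Proof.
have key : forall x y, consec s x y -> forall w, sg * w \in s ->
    (sg * x < w /\ w < sg * y) \/ (sg * y < w /\ w < sg * x) -> False.
  move=> x y /consec_no [hx hy hxy H] w hw.
  case: hsg => E; rewrite E in hw *; rewrite ?mul1r ?mulN1r in hw *.
    case=> [[h1 h2]|[h1 h2]]; [exact: (H w hw)|lra].
  case=> [[h1 h2]|[h1 h2]]; [lra|apply: (H (- w) hw); lra].
case=> C.
- have /consec_no [hu hv _ _] := C.
  split; rewrite ?sg_inv //.
  + by move=> w hw [h1 h2]; apply: (key u v C w hw); left.
  + by move=> w hw [h1 h2]; apply: (key u v C w hw); right.
- have /consec_no [hv hu _ _] := C.
  split; rewrite ?sg_inv //.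
  + by move=> w hw [h1 h2]; apply: (key v u C w hw); right.
  + by move=> w hw [h1 h2]; apply: (key v u C w hw); left.
Qed.

Definition cX (R : realFieldType) (sw : bool) (sg : R) (p : R * R) := sg * (if sw then p.2 else p.1).
Definition cY (R : realFieldType) (sw : bool) (sg : R) (p : R * R) := sg * (if sw then p.1 else p.2).
Definition gX (R : realFieldType) (T : seq (R * R)) (sw : bool) (sg : R) (w : R) :=
  sg * w \in (if sw then ys T else xs T).
Definition gY (R : realFieldType) (T : seq (R * R)) (sw : bool) (sg : R) (w : R) :=
  sg * w \in (if sw then xs T else ys T).

Lemma cross_main (R : realFieldType) (T : seq (R * R)) (N : rel (R * R)) sw (sg : R)
  (hsg : sg = 1 \/ sg = -1) (HN : oriented_subnetwork T N) p pe q qe :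
  p \in T -> q \in T ->
  dir_manhattan_path N p pe -> dir_manhattan_path N q qe ->
  cX sw sg pe <= cX sw sg p -> cY sw sg pe <= cY sw sg p ->
  cX sw sg qe <= cX sw sg q -> cY sw sg qe <= cY sw sg q ->
  cX sw sg p <= cX sw sg q -> cY sw sg q <= cY sw sg p ->
  cX sw sg qe <= cX sw sg pe -> cY sw sg pe <= cY sw sg qe ->
  dir_manhattan_path N p qe.
Proof.
move=> Hp Hq [s [Ps Ls Es]] [t [Pt Lt Et]]; subst pe qe.
have en : forall x y : R, `|sg * x - sg * y| = `|x - y|.
  by move=> x y; rewrite -mulrBr normrM; case: hsg => ->; rewrite ?normrN normr1 mul1r.
have hl1 : forall u v, l1 u v = `|cX sw sg u - cX sw sg v| + `|cY sw sg u - cY sw sg v|.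
  by move=> u v; rewrite /cX /cY !en /l1; case: sw => //; rewrite addrC.
have sg0 : sg != 0 by case: hsg => ->; rewrite ?oppr_eq0 oner_eq0.
have hinj : forall u v, cX sw sg u = cX sw sg v -> cY sw sg u = cY sw sg v -> u = v.
  move=> [u1 u2] [v1 v2]; rewrite /cX /cY /=.
  by case: (sw) => /(mulfI sg0) -> /(mulfI sg0) ->.
have hstep : forall u v, N u v -> step (cX sw sg) (cY sw sg) (gX T sw sg) (gY T sw sg) u v.
  move=> u v /(proj1 HN) [[e2 [m2 C]]|[e1 [m1 C]]]; case: (sw) => /=; rewrite /step /cX /cY /gX /gY /=.
  - right; split; first by rewrite e2.
    by split; [rewrite sg_inv | exact: sep_of].
  - left; split; first by rewrite e2.
    by split; [rewrite sg_inv | exact: sep_of].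
  - left; split; first by rewrite e1.
    by split; [rewrite sg_inv | exact: sep_of].
  - right; split; first by rewrite e1.
    by split; [rewrite sg_inv | exact: sep_of].
have mx : forall r, r \in T -> r.1 \in xs T by move=> r hr; apply: map_f.
have my : forall r, r \in T -> r.2 \in ys T by move=> r hr; apply: map_f.
have gpX : forall r, r \in T -> gX T sw sg (cX sw sg r).
  by move=> r hr; rewrite /gX /cX sg_inv //; case: (sw); [apply: my|apply: mx].
have gpY : forall r, r \in T -> gY T sw sg (cY sw sg r).
  by move=> r hr; rewrite /gY /cY sg_inv //; case: (sw); [apply: mx|apply: my].
move=> h1 h2 h3 h4 h5 h6 h7 h8.
have [z [D1 D2 [z1 z2] [z3 z4]]] := cross hl1 hinj hstep (leqnn (size s + size t)) Ps Pt Es Et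
  h1 h2 h3 h4 h5 h6 h7 h8 (gpX p Hp) (gpY p Hp) (gpX q Hq) (gpY q Hq).
apply: (dmp_cat D1 D2).
by rewrite !hl1; apply: lin_add.
Qed.

Theorem lemma3p1 (R : realFieldType) (T : seq (R * R)) (N : rel (R * R))
    (a b c d e f g h : R) :
  general_position T ->
  oriented_subnetwork T N ->
  (a, c) \in T -> (b, d) \in T -> (e, g) \in T -> (f, h) \in T ->
  a < b -> c < d -> e < f -> g < h ->
  e <= a -> b <= f -> c <= g -> h <= d ->
  dir_manhattan_path N (b, d) (a, c) ->
  dir_manhattan_path N (a, c) (b, d) ->
  dir_manhattan_path N (f, h) (e, g) ->
  dir_manhattan_path N (e, g) (f, h) ->
  [/\ dir_manhattan_path N (b, d) (e, g),
      dir_manhattan_path N (e, g) (b, d),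
      dir_manhattan_path N (f, h) (a, c)
    & dir_manhattan_path N (a, c) (f, h)].
Proof.
move=> _ HN Hac Hbd Heg Hfh ab cd ef gh ea bf cg hd P1 P2 Q1 Q2.
have o1 : (1 : R) = 1 \/ (1 : R) = -1 by left.
have o2 : (-1 : R) = 1 \/ (-1 : R) = -1 by right.
split.
- apply: (cross_main (sw:=false) o1 HN Hbd Hfh P1 Q1); rewrite /cX /cY /= ?mul1r; lra.
- apply: (cross_main (sw:=true) o2 HN Heg Hac Q2 P2); rewrite /cX /cY /= ?mulN1r; lra.
- apply: (cross_main (sw:=true) o1 HN Hfh Hbd Q1 P1); rewrite /cX /cY /= ?mul1r; lra.
- apply: (cross_main (sw:=false) o2 HN Hac Heg P2 Q2); rewrite /cX /cY /= ?mulN1r; lra.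
Qed.
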